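(* Let $k\in\mathbb{N}$, $\gamma\in\mathbb{N}$, and let $p_0,\dots,p_k$ be positive reals summing to $1$. Let $X_1,\dots,X_k$ have the negative multinomial distribution $$\Pr\{X_i=x_i,\ i=1,\dots,k\}=\frac\gamma n\,\frac{n!}{\prod_{i=0}^kx_i!}\prod_{i=0}^kp_i^{x_i},\qquad x_1,\dots,x_k\in\mathbb{Z}^+,$$ where $x_0=\gamma$ and $n=\sum_{i=0}^kx_i$. Let $X_0=\gamma$ and $\boldsymbol{X}=[X_0,\dots,X_k]^\top$. Let $z_0=\gamma$, let $z_1,\dots,z_k$ be nonnegative integers, $n=\sum_{i=0}^kz_i$, $\boldsymbol{z}=[z_0,\dots,z_k]^\top$, $\widehat\mu_i=np_i$ ($i=0,\dots,k$), $\widehat{\boldsymbol{\mu}}=[\widehat\mu_0,\dots,\widehat\mu_k]^\top$. Then $$\Pr\{\boldsymbol{X}\boldsymbol{\prec}\boldsymbol{z}\}\le\prod_{i=0}^k\Big(\frac{\widehat\mu_i}{z_i}\Big)^{z_i}\ \text{ if }\boldsymbol{z}\boldsymbol{\prec}\widehat{\boldsymbol{\mu}},\qquad \Pr\{\boldsymbol{X}\boldsymbol{\succ}\boldsymbol{z}\}\le\prod_{i=0}^k\Big(\frac{\widehat\mu_i}{z_i}\Big)^{z_i}\ \text{ if }\boldsymbol{z}\boldsymbol{\succ}\widehat{\boldsymbol{\mu}}.$$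
   Context: $\mathbb{Z}^+$ is the set of nonnegative integers. For vectors $\boldsymbol{x}=[x_0,\dots,x_k]^\top,\boldsymbol{y}=[y_0,\dots,y_k]^\top$, $\boldsymbol{x}\boldsymbol{\prec}\boldsymbol{y}$ means $x_i\le y_i$ for $i=1,\dots,k$ (index $0$ is not compared), and $\boldsymbol{x}\boldsymbol{\succ}\boldsymbol{y}$ means $x_i\ge y_i$ for $i=1,\dots,k$. The convention $0^0=1$ is used. *)

(* Defs.v *)
From HB Require Import structures.
From mathcomp Require Import all_boot all_order all_algebra.
From mathcomp Require Import all_classical all_reals.
From mathcomp Require Import ereal esum.
Set Implicit Arguments. Unset Strict Implicit. Unset Printing Implicit Defensive.
Import Order.TTheory GRing.Theory Num.Theory.
Local Open Scope ring_scope.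

Definition vsum (k : nat) (x : {ffun 'I_k.+1 -> nat}) : nat := (\sum_(i < k.+1) x i)%N.

Definition negmult_pmf (R : realType) (k gamma : nat) (p : 'I_k.+1 -> R)
    (x : {ffun 'I_k.+1 -> nat}) : R :=
  (gamma%:R / (vsum x)%:R) * ((vsum x)`!%:R / (\prod_(i < k.+1) (x i)`!)%:R)
  * \prod_(i < k.+1) p i ^+ x i.

Definition nm_support (k gamma : nat) : set {ffun 'I_k.+1 -> nat} :=
  [set x | x ord0 = gamma].

Definition vprec (k : nat) (x y : 'I_k.+1 -> nat) : Prop :=
  forall i : 'I_k.+1, i != ord0 -> (x i <= y i)%N.

Definition nm_prob (R : realType) (k gamma : nat) (p : 'I_k.+1 -> R)
    (A : set {ffun 'I_k.+1 -> nat}) : \bar R :=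
  \esum_(x in @nm_support k gamma `&` A) (negmult_pmf gamma p x)%:E.

(* prod_{i=0}^k (mu_i / z_i)^{z_i}, with 0^0 = 1 *)
Definition chernoff_bound (R : realType) (k : nat) (mu : 'I_k.+1 -> R)
    (z : 'I_k.+1 -> nat) : R :=
  \prod_(i < k.+1) (mu i / (z i)%:R) ^+ z i.

(* Main.v *)
Require Import Defs.
From HB Require Import structures.
From mathcomp Require Import all_boot all_order all_algebra.
From mathcomp Require Import all_classical all_reals.
From mathcomp Require Import ereal esum.
From mathcomp Require Import ring lra.
Import Order.TTheory GRing.Theory Num.Theory.
Local Open Scope ring_scope.

Section Aux.
Variable R : realType.

Definition Bs (y : R) (r M : nat) : R := \sum_(j < M) ('C(r + j, j))%:R * y ^+ j.

Lemma Bs_ge0 y r M : 0 <= y -> 0 <= Bs y r M.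
Proof. by move=> y0; apply: sumr_ge0 => j _; rewrite mulr_ge0 ?exprn_ge0. Qed.

Lemma Bs_mono y r M : 0 <= y -> Bs y r M <= Bs y r M.+1.
Proof.
move=> y0; rewrite /Bs big_ord_recr /= lerDl.
by rewrite mulr_ge0 ?exprn_ge0.
Qed.

Lemma Bs_rec y r M : Bs y r.+1 M.+1 = Bs y r M.+1 + y * Bs y r.+1 M.
Proof.
rewrite /Bs big_ord_recl [in RHS]big_ord_recl /= !addn0 !bin0 -addrA; congr (_ + _).
rewrite mulr_sumr -big_split /=; apply: eq_bigr => i _.
rewrite /bump /= add1n addnS binS natrD mulrDl exprS; congr (_ + _).
  by rewrite addSn addnS.
by rewrite mulrCA.
Qed.

Lemma Bs_bound y r M : 0 <= y < 1 -> (1 - y) ^+ r.+1 * Bs y r M <= 1.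
Proof.
move=> /andP[y0 y1]; elim: r M => [|r IH] M.
  rewrite /Bs expr1.
  have -> : \sum_(j < M) ('C(0 + j, j))%:R * y ^+ j = \sum_(j < M) y ^+ j.
    by apply: eq_bigr => j _; rewrite add0n binn mul1r.
  have -> : (1 - y) * \sum_(j < M) y ^+ j = 1 - y ^+ M.
    by rewrite -opprB mulNr -subrX1 opprB.
  by rewrite lerBlDr lerDl exprn_ge0.
case: M => [|M]; first by rewrite /Bs big_ord0 mulr0.
have h1 : (1 - y) * Bs y r.+1 M.+1 <= Bs y r M.+1.
  rewrite mulrBl mul1r {1}Bs_rec lerBlDr lerD2l.
  exact: (ler_wpM2l y0 (Bs_mono _ _ _ y0)).
rewrite exprSr -mulrA.
apply: le_trans (IH M.+1).
by apply: ler_wpM2l h1; rewrite exprn_ge0 // subr_ge0 ltW.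
Qed.

Fixpoint cnb (r : nat) (s : seq nat) : nat :=
  if s is j :: s' then ('C(r + j - 1, j) * cnb (r + j) s')%N else 1%N.
Fixpoint wq (qs : seq R) (s : seq nat) : R :=
  match qs, s with q :: qs', j :: s' => q ^+ j * wq qs' s' | _, _ => 1 end.
Fixpoint box (k M : nat) : seq (seq nat) :=
  if k is k'.+1 then [seq j :: s | j <- iota 0 M, s <- box k' M] else [:: [::]].

Lemma box_bound (qs : seq R) : all (fun q => 0 <= q) qs -> \sum_(q <- qs) q < 1 ->
  forall r M, (0 < r)%N ->
  (1 - \sum_(q <- qs) q) ^+ r * \sum_(s <- box (size qs) M) (cnb r s)%:R * wq qs s <= 1.
Proof.
elim: qs => [|q qs IH] /=.
  by move=> _ _ r M _; rewrite big_seq1 big_nil subr0 expr1n !mul1r.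
move=> /andP[q0 qs0]; rewrite big_cons => hS r M r0.
set S := \sum_(q <- qs) q in hS IH *.
have S0 : 0 <= S.
  rewrite /S big_seq; apply: sumr_ge0 => i iq.
  by move/allP: qs0 => /(_ i iq).
have hS' : S < 1 by lra.
have IH' := IH qs0 hS'.
set a := 1 - S; set b := 1 - (q + S).
have a0 : 0 < a by rewrite /a; lra.
have b0 : 0 < b by rewrite /b; lra.
rewrite big_allpairs_dep /=.
have eY : forall j, \sum_(s <- box (size qs) M) ('C(r + j - 1, j) * cnb (r + j) s)%:R * (q ^+ j * wq qs s)
   = 'C(r + j - 1, j)%:R * q ^+ j * \sum_(s <- box (size qs) M) (cnb (r + j) s)%:R * wq qs s.
  move=> j; rewrite mulr_sumr; apply: eq_bigr => s _; rewrite natrM.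
  by rewrite -!mulrA; congr (_ * _); rewrite mulrCA.
under eq_bigr => j _ do rewrite eY.
have le1 : \sum_(j <- iota 0 M) 'C(r + j - 1, j)%:R * q ^+ j *
            \sum_(s <- box (size qs) M) (cnb (r + j) s)%:R * wq qs s
         <= \sum_(j <- iota 0 M) 'C(r + j - 1, j)%:R * q ^+ j * (a ^+ (r + j))^-1.
  apply: ler_sum => j _; apply: ler_wpM2l; first by rewrite mulr_ge0 ?exprn_ge0.
  have apos : 0 < a ^+ (r + j) by rewrite exprn_gt0.
  rewrite -[X in _ <= X]mulr1 ler_pdivlMl ?mulr1 //.
  by apply: IH'; rewrite addn_gt0 r0.
apply: le_trans; first by apply: ler_wpM2l; [rewrite exprn_ge0 ?ltW | exact: le1].
case: r r0 {eY le1 IH'} => // r _.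
have -> : \sum_(j <- iota 0 M) 'C(r.+1 + j - 1, j)%:R * q ^+ j * (a ^+ (r.+1 + j))^-1
   = \sum_(j < M) 'C(r.+1 + j - 1, j)%:R * q ^+ j * (a ^+ (r.+1 + j))^-1.
  by rewrite -{1}(subn0 M) -/(index_iota 0 M) big_mkord.
have ey : b = (1 - q / a) * a by rewrite mulrBl mul1r divfK ?gt_eqF // /a /b; ring.
have hy0 : 0 <= q / a by apply: divr_ge0 => //; apply: ltW.
have hy1 : q / a < 1 by rewrite ltr_pdivrMr // mul1r /a ltrBrDr.
apply: le_trans (Bs_bound (q / a) r M _); last by rewrite hy0 hy1.
rewrite /Bs !mulr_sumr le_eqVlt; apply/orP; left; apply/eqP; apply: eq_bigr => j _.
rewrite addSn subn1 /= ey.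
rewrite -addSn exprD exprMn expr_div_n. field.
by rewrite !expf_neq0 ?gt_eqF.
Qed.

Lemma box_mem k M s : size s = k -> all (fun j => (j < M)%N) s -> s \in box k M.
Proof.
elim: k s => [|k IH] [|j s] //= [hs] /andP[hj hall].
apply: (allpairs_f (fun j s => j :: s)); first by rewrite mem_iota.
exact: IH.
Qed.

Lemma box_uniq k M : uniq (box k M).
Proof.
elim: k => [|k IH] //=.
apply: allpairs_uniq => //; first exact: iota_uniq.
by move=> [x1 y1] [x2 y2] _ _ /= [-> ->].
Qed.

Lemma sub_sum_le (T : eqType) (L B : seq T) (f : T -> R) :
  uniq L -> {subset L <= B} -> uniq B -> (forall x, x \in B -> 0 <= f x) ->
  \sum_(x <- L) f x <= \sum_(x <- B) f x.
Proof.
move=> uL sLB uB f0.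
have -> : \sum_(x <- L) f x = \sum_(x <- B | x \in L) f x.
  rewrite -[RHS]big_filter; apply: perm_big; apply: uniq_perm => //.
    exact: filter_uniq.
  by move=> x; rewrite mem_filter; case xL: (x \in L) => //=; rewrite sLB.
rewrite [X in _ <= X](bigID (fun x => x \in L)) /= lerDl big_seq_cond.
by apply: sumr_ge0 => x /andP[xB _]; apply: f0.
Qed.

Lemma cnb_fact r s : (0 < r)%N ->
  (cnb r s * ((r - 1)`! * \prod_(j <- s) j`!))%N = (r - 1 + \sum_(j <- s) j)`!.
Proof.
case: r => // r _; rewrite subn1 /=.
elim: s r => [|j s IH] r /=; first by rewrite big_nil big_nil muln1 mul1n addn0.
rewrite !big_cons.
have h := IH (r + j)%N.
rewrite ?addSn ?addnS ?subn1 /= in h *.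
have hb := bin_fact (leq_addl r j).
rewrite addnK in hb.
rewrite addnA -h -hb.
ring.
Qed.

Lemma wq_map (I : Type) (l : seq I) (f : I -> R) (g : I -> nat) :
  wq (map f l) (map g l) = \prod_(i <- l) f i ^+ g i.
Proof. by elim: l => [|i l IH] /=; rewrite ?big_nil ?big_cons ?IH. Qed.

Lemma wq_ge0 (qs : seq R) s : all (fun q => 0 <= q) qs -> 0 <= wq qs s.
Proof.
elim: qs s => [|q qs IH] [|j s] //= /andP[q0 qs0].
by rewrite mulr_ge0 ?exprn_ge0 ?IH.
Qed.

Definition sx k (x : {ffun 'I_k.+1 -> nat}) : seq nat := [seq x (lift ord0 i) | i <- enum 'I_k].
Definition qsq k (p t : 'I_k.+1 -> R) : seq R := [seq p (lift ord0 i) * t (lift ord0 i) | i <- enum 'I_k].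

Arguments sx {k}. Arguments qsq {k}.

Lemma pmf_fac k gamma (p t : 'I_k.+1 -> R) (x : {ffun 'I_k.+1 -> nat}) :
  (0 < gamma)%N -> x ord0 = gamma ->
  negmult_pmf gamma p x * \prod_(i < k) t (lift ord0 i) ^+ x (lift ord0 i)
  = p ord0 ^+ gamma * (cnb gamma (sx x))%:R * wq (qsq p t) (sx x).
Proof.
move=> g0 x0.
rewrite /qsq /sx wq_map big_enum /=.
under [X in _ = _ * X]eq_bigr => i _ do rewrite exprMn.
rewrite big_split /=.
have hc := cnb_fact gamma (sx x) g0.
rewrite /sx big_map big_map big_enum big_enum /= in hc.
rewrite /negmult_pmf /vsum !big_ord_recl /= x0.
set m := (\sum_(i < k) x (lift ord0 i))%N in hc *.
set P := (\prod_(i < k) (x (lift ord0 i))`!)%N in hc *.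
set A := \prod_(i < k) p (lift ord0 i) ^+ x (lift ord0 i).
set B := \prod_(i < k) t (lift ord0 i) ^+ x (lift ord0 i).
case: gamma g0 x0 hc => // g _ x0.
rewrite subn1 /= => hc.
have P0 : (P%:R : R) != 0 by rewrite pnatr_eq0 -lt0n prodn_gt0 // => i; exact: fact_gt0.
have gf0 : ((g`!)%:R : R) != 0 by rewrite pnatr_eq0 -lt0n fact_gt0.
have Ec : ((cnb g.+1 [seq x (lift ord0 i) | i <- enum 'I_k])%:R : R) = (g + m)`!%:R / (g`! * P)%:R.
  by rewrite -hc natrM mulfK // natrM mulf_neq0.
rewrite Ec addSn factS factS !natrM.
field.
rewrite P0 gf0 /=; have := ler0n R g; have := ler0n R m; move=> h1 h2; apply/andP; split; apply/eqP; lra.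
Qed.

Lemma main_bound k gamma (p : 'I_k.+1 -> R) (hg : (0 < gamma)%N) (hp : forall i, 0 < p i)
  (z : {ffun 'I_k.+1 -> nat}) (hz0 : z ord0 = gamma) (A : set {ffun 'I_k.+1 -> nat}) :
  let n := vsum z in
  let t := fun i => (z i)%:R / (n%:R * p i) in
  (forall x : {ffun 'I_k.+1 -> nat}, x ord0 = gamma -> A x ->
     \prod_(i < k) t (lift ord0 i) ^+ z (lift ord0 i)
     <= \prod_(i < k) t (lift ord0 i) ^+ x (lift ord0 i)) ->
  (nm_prob gamma p A <= (chernoff_bound (fun i => n%:R * p i) z)%:E)%E.
Proof.
move=> n t hdom.
have en : n = (gamma + \sum_(i < k) z (lift ord0 i))%N by rewrite /n /vsum big_ord_recl hz0.
have n0 : (0 < n)%N by rewrite en; exact: leq_trans hg (leq_addr _ _).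
have nR : (0 : R) < n%:R by rewrite ltr0n.
have gR : (0 : R) < gamma%:R by rewrite ltr0n.
have t0 : forall i, 0 <= t i.
  by move=> i; rewrite /t divr_ge0 // mulr_ge0 // ltW.
set D := \prod_(i < k) t (lift ord0 i) ^+ z (lift ord0 i).
have D0 : 0 < D.
  rewrite /D; apply: prodr_gt0 => i _.
  case: (posnP (z (lift ord0 i))) => [-> | zp]; first by rewrite expr0 ltr01.
  by rewrite exprn_gt0 // /t divr_gt0 ?ltr0n ?mulr_gt0.
set qs := qsq p t.
have qs0 : all (fun q => 0 <= q) qs.
  by apply/allP => q /mapP [i _ ->]; apply: mulr_ge0; [apply: ltW | apply: t0].
have Sqs : \sum_(q <- qs) q = 1 - gamma%:R / n%:R.
  rewrite /qs /qsq big_map big_enum /=.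
  have -> : \sum_(i < k) p (lift ord0 i) * t (lift ord0 i)
      = \sum_(i < k) (z (lift ord0 i))%:R / n%:R.
    apply: eq_bigr => i _; rewrite /t; field.
    by rewrite (gt_eqF nR) (gt_eqF (hp _)).
  rewrite -mulr_suml -natr_sum.
  have e : (n%:R : R) = gamma%:R + (\sum_(i < k) z (lift ord0 i))%:R by rewrite en natrD.
  rewrite e; field; rewrite -e gt_eqF //.
have Sqs1 : \sum_(q <- qs) q < 1.
  by rewrite Sqs ltrBlDr ltrDl divr_gt0.
rewrite /nm_prob /esum; apply: ge_ereal_sup => _ [X [finX XS] <-].
rewrite fsbig_finite // sumEFin lee_fin.
set L := finmap.enum_fset (fset_set X).
have LX : forall x, x \in L -> setI (@nm_support k gamma) A x.
  move=> x xL; apply: XS; have h := in_fset_set finX x.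
  by rewrite -in_setE -h.
have uL : uniq L := finmap.fset_uniq _.
apply: (@le_trans _ _ (D^-1 * \sum_(x <- L) negmult_pmf gamma p x *
          \prod_(i < k) t (lift ord0 i) ^+ x (lift ord0 i))).
  rewrite mulr_sumr big_seq [X in _ <= X]big_seq; apply: ler_sum => x xL.
  have [hx0 hA] := LX x xL.
  have pm0 : 0 <= negmult_pmf gamma p x.
    rewrite /negmult_pmf !mulr_ge0 ?divr_ge0 ?ler0n //.
    by apply: prodr_ge0 => i _; rewrite exprn_ge0 ?ltW.
  rewrite ler_pdivlMl // mulrC.
  exact: (ler_wpM2l pm0 (hdom x hx0 hA)).
have E2 : \sum_(x <- L) negmult_pmf gamma p x * \prod_(i < k) t (lift ord0 i) ^+ x (lift ord0 i)
     = p ord0 ^+ gamma * \sum_(s <- map sx L) (cnb gamma s)%:R * wq qs s.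
  rewrite big_map mulr_sumr big_seq [RHS]big_seq; apply: eq_bigr => x xL.
  have [hx0 _] := LX x xL.
  by rewrite pmf_fac // mulrA.
rewrite E2.
set M := (\sum_(x <- L) vsum x).+1.
have H3 : \sum_(s <- map sx L) (cnb gamma s)%:R * wq qs s
          <= \sum_(s <- box k M) (cnb gamma s)%:R * wq qs s.
  apply: sub_sum_le.
  - rewrite map_inj_in_uniq // => x y xL yL exy.
    have [hx0 _] := LX x xL; have [hy0 _] := LX y yL.
    apply/ffunP => i; case: (unliftP ord0 i) => [j ->|->]; last by rewrite hx0 hy0.
    by apply: (proj2 (eq_in_map _ _ _) exy j); rewrite mem_enum.
  - move=> s /mapP [x xL ->]; apply: box_mem; first by rewrite size_map size_enum_ord.
    apply/allP => j /mapP [i _ ->].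
    rewrite /M ltnS; apply: (@leq_trans (vsum x)).
      by rewrite /vsum (bigD1 (lift ord0 i)) //= leq_addr.
    by rewrite (bigD1_seq x) //= leq_addr.
  - exact: box_uniq.
  - by move=> s _; rewrite mulr_ge0 ?ler0n ?wq_ge0.
have H4 := box_bound qs qs0 Sqs1 gamma M hg.
rewrite /qs /qsq size_map size_enum_ord -/(qsq p t) -/qs in H4.
have c0 : 0 < (1 - \sum_(q <- qs) q) ^+ gamma by rewrite exprn_gt0 // subr_gt0.
have H5 : \sum_(s <- box k M) (cnb gamma s)%:R * wq qs s <= ((1 - \sum_(q <- qs) q) ^+ gamma)^-1.
  by rewrite -[X in _ <= X]mulr1 ler_pdivlMl.
apply: le_trans (_ : D^-1 * (p ord0 ^+ gamma * ((1 - \sum_(q <- qs) q) ^+ gamma)^-1) <= _).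
  apply: ler_wpM2l; first by rewrite invr_ge0 ltW.
  apply: ler_wpM2l; first by apply: exprn_ge0; apply: ltW.
  exact: le_trans H3 H5.
rewrite le_eqVlt; apply/orP; left; apply/eqP.
rewrite Sqs /chernoff_bound big_ord_recl hz0 /D -prodfV.
have -> : 1 - (1 - gamma%:R / n%:R) = gamma%:R / n%:R :> R by ring.
rewrite -exprVn invf_div -exprMn mulrC; congr (_ * _).
  by congr (_ ^+ _); field; rewrite gt_eqF.
by apply: eq_bigr => i _; rewrite -exprVn /t invf_div.
Qed.
End Aux.

Theorem corollary2 (R : realType) (k gamma : nat) (p : 'I_k.+1 -> R)
  (hgamma : (0 < gamma)%N)
  (hp : forall i, 0 < p i) (hp1 : \sum_(i < k.+1) p i = 1)
  (z : {ffun 'I_k.+1 -> nat}) (hz0 : z ord0 = gamma) :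
  let n := vsum z in
  let mu := fun i => n%:R * p i in
  ((forall i : 'I_k.+1, i != ord0 -> (z i)%:R <= mu i) ->
     (@nm_prob R k gamma p [set x | vprec x z] <= (chernoff_bound mu z)%:E)%E) /\
  ((forall i : 'I_k.+1, i != ord0 -> mu i <= (z i)%:R) ->
     (@nm_prob R k gamma p [set x | vprec z x] <= (chernoff_bound mu z)%:E)%E).
Proof.
move=> n mu.
have en : n = (gamma + \sum_(i < k) z (lift ord0 i))%N by rewrite /n /vsum big_ord_recl hz0.
have n0 : (0 < n)%N by rewrite en; exact: leq_trans hgamma (leq_addr _ _).
have nR : (0 : R) < n%:R by rewrite ltr0n.
have np : forall i, 0 < n%:R * p i by move=> i; rewrite mulr_gt0.
have t0 : forall i, 0 <= (z i)%:R / (n%:R * p i).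
  by move=> i; rewrite divr_ge0 // ltW.
have nz : forall i : 'I_k, lift ord0 i != ord0 by move=> i; rewrite eq_sym neq_lift.
split=> hmu.
  apply: (@main_bound R k gamma p hgamma hp z hz0) => x hx0 hA /=.
  apply: ler_prod => i _; rewrite exprn_ge0 ?t0 //=.
  apply: ler_wiXn2l; first exact: t0.
    by rewrite ler_pdivrMr // mul1r; apply: hmu.
  exact: hA.
apply: (@main_bound R k gamma p hgamma hp z hz0) => x hx0 hA /=.
apply: ler_prod => i _; rewrite exprn_ge0 ?t0 //=.
apply: ler_weXn2l.
  by rewrite ler_pdivlMr // mul1r; apply: hmu.
exact: hA.
Qed.
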